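(* Let $M$ be a matroid of rank $r$ on a finite set $E$ and let $\mathcal X\subseteq 2^E$. Then $\mathcal X$ is complete with respect to $M$ if and only if there is an erection $N$ of $M$ such that \[ \mathcal X=\{X\subseteq E : r_N(X)\le r\}. \]
   Context: For a matroid $M$ of rank $r$ on $E$ with independent sets $\mathcal I$, its truncation is $T(M)=(E,\{I\in\mathcal I:|I|\le r-1\})$. A matroid $N$ on $E$ is an erection of $M$ if $T(N)=M$ or $N=M$. A set $X\subseteq E$ is $k$-closed in $M$ if $\mathrm{cl}_M(Y)\subseteq X$ for every $Y\subseteq X$ with $|Y|\le k$; the $k$-closure $\mathrm{cl}_k(X)$ is the intersection of all $k$-closed sets containing $X$. A collection $\mathcal X\subseteq 2^E$ is complete with respect to $M$ if: (i) for all $X\in\mathcal X$ and $Y\subseteq X$ we have $Y\in\mathcal X$; (ii) every basis of $M$ is in $\mathcal X$; (iii) for all $X\in\mathcal X$, $\mathrm{cl}_{r-1}(X)\in\mathcal X$; (iv) for all $X,Y\in\mathcal X$ with $r_M(X\cap Y)=r$, we have $X\cup Y\in\mathcal X$. *)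

(* Defs.v *)
(* A matroid on the finite ground set E is represented by a
   finType T (E = [set: T]) and its family of independent sets. *)
From mathcomp Require Import all_boot all_order all_algebra.
Set Implicit Arguments. Unset Strict Implicit. Unset Printing Implicit Defensive.
Import Order.TTheory GRing.Theory Num.Theory.

Section Matroid.
Variable T : finType.

Definition is_matroid (I : {set {set T}}) : Prop :=
  [/\ set0 \in I,
      (forall A B : {set T}, B \in I -> A \subset B -> A \in I) &
      (forall A B : {set T}, A \in I -> B \in I -> #|A| < #|B| ->
         exists2 x, x \in B :\: A & x |: A \in I)].

Definition mrank (I : {set {set T}}) (X : {set T}) : nat :=
  \max_(Y in I | Y \subset X) #|Y|.

Definition mrk (I : {set {set T}}) : nat := mrank I [set: T].

Definition is_basis (I : {set {set T}}) (B : {set T}) : bool :=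
  (B \in I) && (#|B| == mrk I).

Definition truncation (I : {set {set T}}) : {set {set T}} :=
  [set Y in I | ((#|Y|%:Z) <= (mrk I)%:Z - 1)%R].

Definition erection (N M : {set {set T}}) : Prop :=
  is_matroid N /\ (truncation N = M \/ N = M).

Definition mcl (I : {set {set T}}) (Y : {set T}) : {set T} :=
  [set x | mrank I (x |: Y) == mrank I Y].

(* X is k-closed (k an integer, since it is used with k = r - 1) *)
Definition kclosed (I : {set {set T}}) (k : int) (X : {set T}) : bool :=
  [forall Y : {set T}, ((Y \subset X) && ((#|Y|%:Z) <= k)%R) ==> (mcl I Y \subset X)].

Definition kcl (I : {set {set T}}) (k : int) (X : {set T}) : {set T} :=
  \bigcap_(Z | kclosed I k Z && (X \subset Z)) Z.

Definition complete (I : {set {set T}}) (XX : {set {set T}}) : Prop :=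
  [/\ (forall X Y : {set T}, X \in XX -> Y \subset X -> Y \in XX),
      (forall B : {set T}, is_basis I B -> B \in XX),
      (forall X : {set T}, X \in XX -> kcl I ((mrk I)%:Z - 1)%R X \in XX) &
      (forall X Y : {set T}, X \in XX -> Y \in XX ->
         mrank I (X :&: Y) = mrk I -> X :|: Y \in XX)].

End Matroid.

(* Main.v *)
Require Import Defs.
From mathcomp Require Import all_boot all_order all_algebra.
From mathcomp Require Import zify.
Set Implicit Arguments. Unset Strict Implicit. Unset Printing Implicit Defensive.

Lemma mrank_le_card (T : finType) (I : {set {set T}}) (X : {set T}) : mrank I X <= #|X|.
Proof.
apply/bigmax_leqP => Y /andP[_ sYX]; exact: subset_leq_card.
Qed.

Lemma mrank_mono (T : finType) (I : {set {set T}}) (X Y : {set T}) :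
  X \subset Y -> mrank I X <= mrank I Y.
Proof.
move=> sXY; apply/bigmax_leqP => Z /andP[ZI sZX].
by rewrite /mrank; apply: leq_bigmax_cond; rewrite ZI (subset_trans sZX sXY).
Qed.

Lemma indep_le_mrank (T : finType) (I : {set {set T}}) (X Y : {set T}) :
  Y \in I -> Y \subset X -> #|Y| <= mrank I X.
Proof.
move=> YI sYX.
by rewrite /mrank; apply: leq_bigmax_cond; rewrite YI sYX.
Qed.

Lemma mrank_witness (T : finType) (I : {set {set T}}) (X : {set T}) :
  is_matroid I -> exists2 Y, (Y \in I) && (Y \subset X) & #|Y| = mrank I X.
Proof.
case=> I0 _ _.
have hA : 0 < #|[pred Y : {set T} | (Y \in I) && (Y \subset X)]|.
  by apply/card_gt0P; exists set0; rewrite inE I0 sub0set.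
case: (eq_bigmax_cond (fun Y : {set T} => #|Y|) hA) => Y HY e.
by exists Y; [exact: HY | rewrite /mrank e].
Qed.

Lemma mrank_indep (T : finType) (I : {set {set T}}) (Y : {set T}) :
  Y \in I -> mrank I Y = #|Y|.
Proof.
by move=> YI; apply/eqP; rewrite eqn_leq mrank_le_card indep_le_mrank.
Qed.

Lemma full_rank_indep (T : finType) (I : {set {set T}}) (Y : {set T}) :
  is_matroid I -> #|Y| <= mrank I Y -> Y \in I.
Proof.
move=> mI h; case: (mrank_witness Y mI) => J /andP[JI sJY] e.
have -> : Y = J.
  apply/eqP; rewrite eq_sym eqEcard sJY /=; by rewrite e.
exact: JI.
Qed.

Lemma mrank_le_mrk (T : finType) (I : {set {set T}}) (X : {set T}) : mrank I X <= mrk I.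
Proof. exact: mrank_mono (subsetT X). Qed.

Lemma augment (T : finType) (I : {set {set T}}) (X J : {set T}) :
  is_matroid I -> J \in I -> J \subset X ->
  exists K, [/\ K \in I, J \subset K, K \subset X & #|K| = mrank I X].
Proof.
move=> mI; have [_ _ ex] := mI.
move: {2}(mrank I X - #|J|) (erefl (mrank I X - #|J|)) => n.
elim: n J => [|n IH] J hn JI sJX.
  exists J; split => //; apply/eqP; rewrite eqn_leq indep_le_mrank //.
  by move: hn => /eqP; rewrite subn_eq0.
case: (mrank_witness X mI) => K0 /andP[K0I sK0X] eK0.
have lt : #|J| < #|K0| by lia.
case: (ex J K0 JI K0I lt) => x; rewrite inE => /andP[xJ xK0] xJI.
have sxX : x |: J \subset X by rewrite subUset sub1set (subsetP sK0X) // sJX.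
have hn' : mrank I X - #|x |: J| = n by rewrite cardsU1 xJ; lia.
case: (IH _ hn' xJI sxX) => K [KI sJK sKX eK].
by exists K; split => //; apply: subset_trans sJK; exact: subsetUr.
Qed.

Lemma submod (T : finType) (I : {set {set T}}) (X Y : {set T}) :
  is_matroid I ->
  mrank I (X :|: Y) + mrank I (X :&: Y) <= mrank I X + mrank I Y.
Proof.
move=> mI; have [_ dI _] := mI.
case: (mrank_witness (X :&: Y) mI) => J /andP[JI sJ] eJ.
have sJU : J \subset X :|: Y.
  by apply: subset_trans sJ _; apply: subset_trans (subsetIl X Y) (subsetUl X Y).
case: (augment mI JI sJU) => K [KI sJK sKU eK].
have h1 : #|K :&: X| <= mrank I X.
  by apply: indep_le_mrank; [apply: dI KI _; exact: subsetIl | exact: subsetIr].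
have h2 : #|K :&: Y| <= mrank I Y.
  by apply: indep_le_mrank; [apply: dI KI _; exact: subsetIl | exact: subsetIr].
have e := cardsUI (K :&: X) (K :&: Y).
rewrite -setIUr (setIidPl sKU) in e.
have h3 : #|J| <= #|(K :&: X) :&: (K :&: Y)|.
  apply: subset_leq_card; rewrite setIACA setIid subsetI sJK; exact: sJ.
lia.
Qed.

Lemma cl_union (T : finType) (I : {set {set T}}) (A S : {set T}) :
  is_matroid I -> (forall y, y \in S -> mrank I (y |: A) = mrank I A) ->
  mrank I (A :|: S) = mrank I A.
Proof.
move=> mI.
move: {2}#|S| (erefl #|S|) => n; elim: n S => [|n IH] S hn hS.
  by move: hn => /eqP; rewrite cards_eq0 => /eqP ->; rewrite setU0.
have : 0 < #|S| by rewrite hn.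
case/card_gt0P => y yS.
have hn' : #|S :\ y| = n by move: (cardsD1 y S); rewrite yS; lia.
have e := IH (S :\ y) hn' (fun z zS => hS z (subsetP (subsetDl S [set y]) z zS)).
have eS : A :|: S = (A :|: S :\ y) :|: (y |: A).
  apply/setP => z; rewrite !inE; case: (eqVneq z y) => [->|] /=; first by rewrite yS !orbT.
  by case: (z \in A); case: (z \in S).
apply/eqP; rewrite eqn_leq; apply/andP; split; last by apply: mrank_mono; exact: subsetUl.
have sm := submod (A :|: S :\ y) (y |: A) mI.
have : mrank I A <= mrank I ((A :|: S :\ y) :&: (y |: A)).
  apply: mrank_mono; rewrite subsetI subsetUl; exact: subsetUr.
rewrite eS; rewrite e hS // in sm; lia.
Qed.

Lemma trunc_mem (T : finType) (N M : {set {set T}}) (Y : {set T}) :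
  truncation N = M -> (Y \in M) = (Y \in N) && (#|Y| < mrk N).
Proof.
move=> <-; rewrite inE; congr (_ && _).
apply/idP/idP; lia.
Qed.

Lemma trunc_sub (T : finType) (N M : {set {set T}}) :
  truncation N = M -> M \subset N.
Proof. by move=> tN; apply/subsetP => Y; rewrite (trunc_mem _ tN) => /andP[]. Qed.

Lemma mrank_subfam (T : finType) (N M : {set {set T}}) (X : {set T}) :
  M \subset N -> mrank M X <= mrank N X.
Proof.
move=> sMN; apply/bigmax_leqP => Y /andP[YM sYX].
by apply: indep_le_mrank => //; exact: (subsetP sMN).
Qed.

Lemma trunc_mrank (T : finType) (N M : {set {set T}}) (Z : {set T}) :
  is_matroid N -> truncation N = M -> #|Z| < mrk N -> mrank N Z = mrank M Z.
Proof.
move=> mN tN hZ; apply/eqP; rewrite eqn_leq (mrank_subfam _ (trunc_sub tN)) andbT.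
case: (mrank_witness Z mN) => J /andP[JN sJZ] <-.
apply: indep_le_mrank => //; rewrite (trunc_mem _ tN) JN /=.
by apply: leq_ltn_trans hZ; exact: subset_leq_card.
Qed.

Lemma trunc_mrk (T : finType) (N M : {set {set T}}) :
  is_matroid N -> is_matroid M -> truncation N = M -> mrk N = (mrk M).+1.
Proof.
move=> mN mM tN.
have [M0 _ _] := mM; have [_ dN _] := mN.
have s0 : 0 < mrk N by move: M0; rewrite (trunc_mem _ tN) cards0 => /andP[].
case: (mrank_witness [set: T] mN) => K /andP[KN _] eK.
rewrite -/(mrk N) in eK.
have : 0 < #|K| by rewrite eK.
case/card_gt0P => k kK.
have hK : K :\ k \in M.
  rewrite (trunc_mem _ tN); apply/andP; split; first by apply: dN KN _; exact: subsetDl.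
  by move: (cardsD1 k K); rewrite kK; lia.
have h1 : #|K :\ k| <= mrk M by apply: indep_le_mrank => //; exact: subsetT.
have h2 : mrk M < mrk N.
  apply: (@leq_ltn_trans (mrk N).-1); last lia.
  apply/bigmax_leqP => Y /andP[YM _]; move: YM; rewrite (trunc_mem _ tN) => /andP[_]; lia.
move: (cardsD1 k K); rewrite kK; lia.
Qed.

Lemma erection_complete (T : finType) (N M : {set {set T}}) :
  is_matroid M -> erection N M -> complete M [set X | mrank N X <= mrk M].
Proof.
move=> mM [mN [tN | eN]]; last first.
  subst N.
  have all : forall X : {set T}, X \in [set X | mrank M X <= mrk M].
    by move=> X; rewrite inE mrank_le_mrk.
  by split=> *; apply: all.
have sMN := trunc_sub tN.
have eS := trunc_mrk mN mM tN.
split.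
- move=> X Y; rewrite !inE => hX sYX; apply: leq_trans hX; exact: mrank_mono.
- move=> B /andP[BM /eqP eB]; rewrite inE -eB; exact: mrank_le_card.
- move=> X; rewrite inE => hX.
  pose F := [set x | mrank N (x |: X) == mrank N X].
  have sXF : X \subset F by apply/subsetP => x xX; rewrite inE (setUidPr _) // sub1set.
  have rF : mrank N F = mrank N X.
    rewrite -(setUidPr sXF); apply: cl_union => // y; rewrite inE => /eqP //.
  have kF : kclosed M ((mrk M)%:Z - 1)%R F.
    apply/forallP => Y; apply/implyP => /andP[sYF hY]; apply/subsetP => x.
    rewrite inE => /eqP hx; rewrite inE.
    have hY' : #|x |: Y| < mrk N.
      rewrite eS; apply: (leq_ltn_trans (leq_card_setU _ _)); rewrite cards1; lia.
    have hY'' : #|Y| < mrk N by rewrite eS; lia.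
    rewrite -(trunc_mrank mN tN hY') -(trunc_mrank mN tN hY'') in hx.
    have eXY : mrank N (X :|: Y) = mrank N X.
      apply: cl_union => // y yY; have := subsetP sYF y yY; rewrite inE => /eqP //.
    have e2 : mrank N (x |: (X :|: Y)) <= mrank N (X :|: Y).
      have := submod (X :|: Y) (x |: Y) mN.
      have -> : (X :|: Y) :|: (x |: Y) = x |: (X :|: Y).
        apply/setP => z; rewrite !inE; by case: (z == x); case: (z \in X); case: (z \in Y).
      have : mrank N Y <= mrank N ((X :|: Y) :&: (x |: Y)).
        apply: mrank_mono; rewrite subsetI subsetUr; exact: subsetUr.
      lia.
    have e3 : mrank N (x |: X) <= mrank N (x |: (X :|: Y)).
      apply: mrank_mono; rewrite setUA; exact: subsetUl.
    have e4 : mrank N X <= mrank N (x |: X) by apply: mrank_mono; exact: subsetUr.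
    apply/eqP; lia.
  rewrite inE; apply: leq_trans hX; rewrite -rF; apply: mrank_mono.
  rewrite /kcl; apply: bigcap_inf; by rewrite kF sXF.
- move=> X Y; rewrite !inE => hX hY hI.
  have := submod X Y mN.
  have := mrank_subfam (X :&: Y) sMN; lia.
Qed.

Lemma kcl_sub (T : finType) (I : {set {set T}}) k (X : {set T}) : X \subset kcl I k X.
Proof.
apply/subsetP => x xX; apply/bigcapP => Z /andP[_ sXZ]; exact: (subsetP sXZ).
Qed.

Lemma kcl_cl (T : finType) (I : {set {set T}}) k (X Y : {set T}) x :
  Y \subset X -> (#|Y|%:Z <= k)%R -> x \in mcl I Y -> x \in kcl I k X.
Proof.
move=> sYX hY xc; apply/bigcapP => Z /andP[kZ sXZ].
have := forallP kZ Y; rewrite (subset_trans sYX sXZ) hY /= => /subsetP; exact.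
Qed.


Lemma union_lemma (T : finType) (M XX : {set {set T}}) (A S : {set T}) :
  complete M XX -> A \in XX -> mrank M A = mrk M ->
  (forall x, x \in S -> x |: A \in XX) -> A :|: S \in XX.
Proof.
move=> [_ _ _ cU] AX rA.
move: {2}#|S| (erefl #|S|) => n; elim: n S => [|n IH] S hn hS.
  by move: hn => /eqP; rewrite cards_eq0 => /eqP ->; rewrite setU0.
have : 0 < #|S| by rewrite hn.
case/card_gt0P => y yS.
have hn' : #|S :\ y| = n by move: (cardsD1 y S); rewrite yS; lia.
have e := IH (S :\ y) hn' (fun z zS => hS z (subsetP (subsetDl S [set y]) z zS)).
have eS : A :|: S = (A :|: S :\ y) :|: (y |: A).
  apply/setP => z; rewrite !inE; case: (eqVneq z y) => [->|] /=; first by rewrite yS !orbT.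
  by case: (z \in A); case: (z \in S).
rewrite eS; apply: cU => //; first exact: hS.
apply/eqP; rewrite eqn_leq mrank_le_mrk -rA; apply: mrank_mono.
rewrite subsetI subsetUl; exact: subsetUr.
Qed.

Lemma factA (T : finType) (M XX : {set {set T}}) (X : {set T}) :
  is_matroid M -> complete M XX -> X \notin XX -> mrank M X = mrk M.
Proof.
move=> mM cX XnX; have [cD cB cK _] := cX.
apply/eqP; rewrite eqn_leq mrank_le_mrk /=; rewrite leqNgt; apply/negP => lt.
case: (mrank_witness X mM) => J /andP[JM sJX] eJ.
have JX : J \in XX.
  case: (augment mM JM (subsetT J)) => K [KM sJK _ eK].
  by apply: cD sJK; apply: cB; rewrite /is_basis KM eK /=.
have := cK J JX => kX.
move/negP: XnX; apply; apply: cD kX _.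
apply/subsetP => x xX; apply: (kcl_cl (Y := J)) => //.
  by move: lt; rewrite -eJ => lt; apply/idP; lia.
rewrite inE eqn_leq [X in _ && X]mrank_mono ?subsetUr // andbT.
rewrite (mrank_indep JM) eJ; apply: mrank_mono; rewrite subUset sub1set xX; exact: sJX.
Qed.

Lemma factC (T : finType) (M XX : {set {set T}}) (Z : {set T}) z :
  is_matroid M -> complete M XX -> Z \notin XX -> #|Z| = (mrk M).+1 -> z \in Z ->
  Z :\ z \in M.
Proof.
move=> mM cX ZnX cZ zZ; have [cD cB cK _] := cX.
apply/negPn/negP => Zz.
case: (mrank_witness (Z :\ z) mM) => J /andP[JM sJ] eJ.
have cZz : #|Z :\ z| = mrk M by move: (cardsD1 z Z); rewrite zZ; lia.
have ltJ : #|J| < #|Z :\ z|.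
  rewrite ltnNge; apply/negP => h; apply: (negP Zz); apply: full_rank_indep => //; lia.
have : 0 < #|(Z :\ z) :\: J|.
  have := cardsD (Z :\ z) J; rewrite (setIidPr sJ); lia.
case/card_gt0P => e; rewrite inE => /andP[eJ' eZz].
have eZ : e \in Z by move: eZz; rewrite inE => /andP[].
have cW : #|Z :\ e| = mrk M by move: (cardsD1 e Z); rewrite eZ; lia.
have WX : Z :\ e \in XX.
  apply/negPn/negP => WnX.
  have := factA mM cX WnX => rW.
  apply: (negP WnX); apply: cB; rewrite /is_basis cW eqxx andbT.
  by apply: full_rank_indep => //; rewrite rW cW.
apply: (negP ZnX); apply: cD (cK _ WX) _.
apply/subsetP => y yZ; case: (eqVneq y e) => [->|ye]; last first.
  by apply: (subsetP (kcl_sub _ _ _)); rewrite !inE ye.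
apply: (kcl_cl (Y := (Z :\ z) :\ e)).
- by apply: setSD; exact: subsetDl.
- have := cardsD1 e (Z :\ z); rewrite eZz cZz => h; apply/idP; lia.
rewrite inE (setD1K eZz) -eJ eqn_leq; apply/andP; split.
  apply: indep_le_mrank => //; apply/subsetP => w wJ; rewrite in_setD1 (subsetP sJ) // andbT.
  by apply/eqP => we; move: eJ'; rewrite -we wJ.
by rewrite eJ; apply: mrank_mono; exact: subsetDl.
Qed.

Lemma complete_erection (T : finType) (M XX : {set {set T}}) :
  is_matroid M -> complete M XX ->
  exists N : {set {set T}}, erection N M /\ XX = [set X : {set T} | mrank N X <= mrk M].
Proof.
move=> mM cX; have [cD cB cK cU] := cX; have [M0 dM eM] := mM.
set r := mrk M.
pose N := M :|: [set Z : {set T} | (#|Z| == r.+1) && (Z \notin XX)].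
have Mcard : forall Y, Y \in M -> #|Y| <= r.
  by move=> Y YM; apply: indep_le_mrank => //; exact: subsetT.
have Nmem : forall Y, (Y \in N) = (Y \in M) || ((#|Y| == r.+1) && (Y \notin XX)).
  by move=> Y; rewrite !inE.
have Ncard : forall Y, Y \in N -> #|Y| <= r.+1.
  move=> Y; rewrite Nmem => /orP[/Mcard|/andP[/eqP -> _]] //; lia.
have bigM : forall Y, Y \in N -> #|Y| <= r -> Y \in M.
  move=> Y; rewrite Nmem => /orP[//|/andP[/eqP -> _]]; lia.
have XXM : forall Y, Y \in N -> Y \in XX -> Y \in M.
  by move=> Y; rewrite Nmem => /orP[//|/andP[_ /negP h]] /h.
have mN : is_matroid N.
  split.
  - by rewrite Nmem M0.
  - move=> A B; rewrite Nmem => /orP[BM sAB|/andP[/eqP cB' BnX] sAB].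
      by rewrite Nmem (dM _ _ BM sAB).
    case: (eqVneq A B) => [-> |AB]; first by rewrite Nmem cB' eqxx BnX orbT.
    have : A \proper B by rewrite properEneq AB.
    case/properP => _ [b bB bA].
    have BbM := factC mM cX BnX cB' bB.
    rewrite Nmem (dM _ _ BbM) //; apply/subsetP => a aA; rewrite in_setD1 (subsetP sAB) // andbT.
    by apply/eqP => ab; move: bA; rewrite -ab aA.
  - move=> A B AN BN lt.
    have AM : A \in M by apply: bigM AN _; have := Ncard B BN; lia.
    move: (BN); rewrite Nmem => /orP[].
    + move=> BM; case: (eM A B AM BM lt) => x xBA xA; exists x => //.
      by rewrite Nmem xA.
    + move=> /andP[/eqP cB' BnX].
      case: (ltnP #|A| r) => hA.
      * have : 0 < #|B| by rewrite cB'.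
        case/card_gt0P => b bB.
        have BbM := factC mM cX BnX cB' bB.
        have lt' : #|A| < #|B :\ b| by move: (cardsD1 b B); rewrite bB; lia.
        case: (eM A _ AM BbM lt') => x; rewrite !inE => /andP[xA /andP[_ xB]] xAM.
        by exists x; [rewrite inE xA xB | rewrite Nmem xAM].
      * have cA : #|A| = r by have := Mcard A AM; lia.
        have AX : A \in XX by apply: cB; rewrite /is_basis AM cA eqxx.
        case: (boolP [exists x in B :\: A, x |: A \notin XX]).
          case/exists_inP => x xBA xAX; exists x => //.
          rewrite Nmem xAX andbT; apply/orP; right.
          move: xBA; rewrite inE => /andP[xA _]; rewrite cardsU1 xA cA.
          done.
        move=> /exists_inPn h.
        have : A :|: (B :\: A) \in XX.
          apply: (union_lemma cX AX); first by rewrite (mrank_indep AM) cA.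
          by move=> x /h /negPn.
        move=> UX; apply: False_ind; apply: (negP BnX); apply: cD UX _.
        by apply/subsetP => y yB; rewrite !inE yB andbT; case: (y \in A).
have sMN : M \subset N by apply/subsetP => Y YM; rewrite Nmem YM.
have rX : forall X, X \in XX -> mrank N X <= r.
  move=> X XX'; apply/bigmax_leqP => Y /andP[YN sYX].
  by apply: Mcard; apply: XXM => //; apply: cD XX' sYX.
have rnX : forall X, X \notin XX -> r < mrank N X.
  move=> X XnX.
  case: (mrank_witness X mM) => J /andP[JM sJX] eJ.
  have cJ : #|J| = r by rewrite eJ (factA mM cX XnX).
  have JX : J \in XX by apply: cB; rewrite /is_basis JM cJ eqxx.
  case: (boolP [exists x in X, x |: J \notin XX]).
    case/exists_inP => x xX xJX.
    have xJ : x \notin J by apply/negP => xJ; move: xJX; rewrite (setUidPr _) ?sub1set // JX.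
    have : x |: J \in N by rewrite Nmem cardsU1 xJ cJ eqxx xJX orbT.
    move=> xJN; have := indep_le_mrank xJN (_ : x |: J \subset X).
    rewrite cardsU1 xJ cJ; apply; rewrite subUset sub1set xX; exact: sJX.
  move=> /exists_inPn h; apply: False_ind; apply: (negP XnX).
  rewrite -(setUidPr sJX); apply: (union_lemma cX JX); first by rewrite (mrank_indep JM) cJ.
  by move=> x /h /negPn.
exists N; split; last first.
  apply/setP => X; rewrite inE; case: (boolP (X \in XX)) => h; first by rewrite rX.
  by apply/esym/negbTE; rewrite -ltnNge; apply: rnX.
split => //.
case: (boolP ([set: T] \in XX)) => TX.
  right; apply/setP => Y; rewrite Nmem; case: (Y \in M) => //=.
  by rewrite (cD _ Y TX (subsetT Y)) andbF.
left.
have eN : mrk N = r.+1.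
  apply/eqP; rewrite eqn_leq rnX // andbT.
  apply/bigmax_leqP => Y /andP[YN _]; exact: Ncard.
apply/setP => Y; rewrite inE eN.
case: (boolP (Y \in N)) => YN /=.
  apply/idP/idP => h.
    by apply: bigM => //; lia.
  by have := Mcard Y h; lia.
by apply/esym/negbTE; apply/negP => YM; move: YN; rewrite (subsetP sMN).
Qed.

Unset Implicit Arguments.

Theorem lemma3p3 (T : finType) (M : {set {set T}}) (XX : {set {set T}}) :
  is_matroid M ->
  (complete M XX <->
   exists N : {set {set T}},
     erection N M /\ XX = [set X : {set T} | mrank N X <= mrk M]).
Proof.
move=> mM; split; first exact: complete_erection.
by case=> N [eN ->]; exact: erection_complete.
Qed.
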